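(* Let $K\subseteq\Sigma^*$ be a bounded context-free language. Then there exists a bounded regular language $R\supseteq K$ such that $\{|w|:w\in K\}=\{|w|:w\in R\}$ and $\Psi(K)=\Psi(R)$.
   Context: A language is bounded if it is contained in $w_1^*\cdots w_k^*$ for some words $w_1,\dots,w_k$. For $a_1\cdots a_n\in\Sigma^*$, $\Psi(a_1\cdots a_n)=\{(a_1,n),(a_2,n-1),\dots,(a_n,1)\}$, and $\Psi(L)=\bigcup_{w\in L}\Psi(w)$. *)

(* Defs.v *)
From Stdlib Require List.
From mathcomp Require Import all_boot.
Set Implicit Arguments. Unset Strict Implicit. Unset Printing Implicit Defensive.

Definition lang (Sigma : Type) := seq Sigma -> Prop.

Record grammar (N Sigma : Type) := Grammar {
  productions : seq (N * seq (N + Sigma));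
  start : N }.

Inductive step (N Sigma : Type) (G : grammar N Sigma) :
    seq (N + Sigma) -> seq (N + Sigma) -> Prop :=
| Step u v A alpha :
    List.In (A, alpha) (productions G) ->
    step G (u ++ inl A :: v) (u ++ alpha ++ v).

Inductive derives (N Sigma : Type) (G : grammar N Sigma) :
    seq (N + Sigma) -> seq (N + Sigma) -> Prop :=
| derives_refl x : derives G x x
| derives_step x y z : step G x y -> derives G y z -> derives G x z.

Definition grammar_lang (N Sigma : Type) (G : grammar N Sigma) : lang Sigma :=
  fun w => derives G [:: inl (start G)] (map inr w).

Definition context_free (Sigma : finType) (L : lang Sigma) : Prop :=
  exists (N : finType) (G : grammar N Sigma),
    forall w, L w <-> grammar_lang G w.

Definition regular (Sigma : finType) (L : lang Sigma) : Prop :=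
  exists (Q : finType) (delta : Q -> Sigma -> Q) (q0 : Q) (F : pred Q),
    forall w, L w <-> F (foldl delta q0 w).

(* w belongs to ws_1^* ... ws_k^* (ws = [:: ws_1; ...; ws_k]). *)
Definition in_star_prod (Sigma : Type) (ws : seq (seq Sigma)) (w : seq Sigma) : Prop :=
  exists ns : seq nat, size ns = size ws /\
    w = flatten (map (fun p => flatten (nseq p.2 p.1)) (zip ws ns)).

Definition bounded (Sigma : Type) (L : lang Sigma) : Prop :=
  exists ws : seq (seq Sigma), forall w, L w -> in_star_prod ws w.

(* Psi(a_1 ... a_n) = {(a_1, n), (a_2, n-1), ..., (a_n, 1)}:
   the letter at 0-based position i is paired with n - i. *)
Definition Psi (Sigma : Type) (w : seq Sigma) (p : Sigma * nat) : Prop :=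
  exists2 i, i < size w & p = (nth p.1 w i, size w - i).

Definition PsiL (Sigma : Type) (L : lang Sigma) (p : Sigma * nat) : Prop :=
  exists2 w, L w & Psi w p.

Definition lengths (Sigma : Type) (L : lang Sigma) (n : nat) : Prop :=
  exists2 w, L w & size w = n.

(* Main.v *)
Require Import Defs.
From mathcomp Require Import all_boot zify.
From Stdlib Require Import ClassicalEpsilon.
Set Implicit Arguments. Unset Strict Implicit. Unset Printing Implicit Defensive.

Inductive gen (N Sigma : Type) (G : grammar N Sigma) : N -> seq Sigma -> Prop :=
| gen_intro A alpha w : List.In (A, alpha) (productions G) -> gens G alpha w -> gen G A w
with gens (N Sigma : Type) (G : grammar N Sigma) : seq (N + Sigma) -> seq Sigma -> Prop :=
| gens_nil : gens G [::] [::]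
| gens_t a al w : gens G al w -> gens G (inr a :: al) (a :: w)
| gens_n B al u w : gen G B u -> gens G al w -> gens G (inl B :: al) (u ++ w).

Scheme gen_ind2 := Induction for gen Sort Prop
with gens_ind2 := Induction for gens Sort Prop.

Lemma gens_cat (N Sigma : Type) (G : grammar N Sigma) x y w1 w2 :
  gens G x w1 -> gens G y w2 -> gens G (x ++ y) (w1 ++ w2).
Proof.
elim: x w1 => [|z x IH] w1 H1 H2.
  by inversion H1.
inversion H1; subst => /=.
  by apply: gens_t; apply: IH.
by rewrite -catA; apply: gens_n => //; apply: IH.
Qed.

Lemma gens_cat_inv (N Sigma : Type) (G : grammar N Sigma) x y w :
  gens G (x ++ y) w -> exists w1 w2, [/\ w = w1 ++ w2, gens G x w1 & gens G y w2].
Proof.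
elim: x w => [|z x IH] w H.
  by exists [::], w; split => //; apply: gens_nil.
inversion H; subst.
  have [w1 [w2 [-> Ha Hb]]] := IH _ H3.
  by exists (a :: w1), w2; split => //; apply: gens_t.
have [w1 [w2 [-> Ha Hb]]] := IH _ H4.
by exists (u ++ w1), w2; split; [rewrite catA | apply: gens_n |].
Qed.

Lemma gens_terms (N Sigma : Type) (G : grammar N Sigma) w :
  gens G (map inr w) w.
Proof. by elim: w => [|a w IH] /=; [apply: gens_nil | apply: gens_t]. Qed.

Lemma derives_gens (N Sigma : Type) (G : grammar N Sigma) x y :
  derives G x y -> forall w, y = map inr w -> gens G x w.
Proof.
elim => {x y} [x|x y z Hs _ IH] w E.
  by subst; apply: gens_terms.
have {}IH := IH _ E.
case: Hs IH => u v A alpha Hin H.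
have [w1 [w23 [-> H1 H23]]] := gens_cat_inv H.
have [w2 [w3 [-> H2 H3]]] := gens_cat_inv H23.
apply: gens_cat => //; apply: gens_n => //.
exact: gen_intro Hin H2.
Qed.

Lemma derives_trans (N Sigma : Type) (G : grammar N Sigma) x y z :
  derives G x y -> derives G y z -> derives G x z.
Proof.
elim => {x y} [x|x y y' Hs _ IH] // H.
exact: derives_step Hs (IH H).
Qed.

Lemma derives_ctx (N Sigma : Type) (G : grammar N Sigma) p q x y :
  derives G x y -> derives G (p ++ x ++ q) (p ++ y ++ q).
Proof.
elim => {x y} [x|x y z Hs _ IH]; first by apply: derives_refl.
apply: derives_step IH.
case: Hs => u v A alpha Hin.
have -> : p ++ (u ++ inl A :: v) ++ q = (p ++ u) ++ inl A :: (v ++ q).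
  by rewrite !catA -!catA.
have -> : p ++ (u ++ alpha ++ v) ++ q = (p ++ u) ++ alpha ++ (v ++ q).
  by rewrite !catA.
exact: Step.
Qed.

Lemma gen_derives (N Sigma : Type) (G : grammar N Sigma) :
  (forall A w, gen G A w -> derives G [:: inl A] (map inr w)) /\
  (forall x w, gens G x w -> derives G x (map inr w)).
Proof.
split.
- apply: (@gen_ind2 N Sigma G (fun A w _ => derives G [:: inl A] (map inr w))
     (fun x w _ => derives G x (map inr w))).
  + move=> A alpha w Hin _ IH.
    apply: derives_step IH.
    have := @Step _ _ G [::] [::] A alpha Hin.
    by rewrite /= cats0.
  + exact: derives_refl.
  + move=> a al w _ IH.
    by have := @derives_ctx _ _ G [:: inr a] [::] _ _ IH; rewrite !cats0.
  + move=> B al u w _ IH1 _ IH2 /=.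
    rewrite map_cat.
    apply: derives_trans (_ : derives G (map inr u ++ al) _).
      by have := @derives_ctx _ _ G [::] al _ _ IH1.
    by have := @derives_ctx _ _ G (map inr u) [::] _ _ IH2; rewrite !cats0.
- apply: (@gens_ind2 N Sigma G (fun A w _ => derives G [:: inl A] (map inr w))
     (fun x w _ => derives G x (map inr w))).
  + move=> A alpha w Hin _ IH.
    apply: derives_step IH.
    have := @Step _ _ G [::] [::] A alpha Hin.
    by rewrite /= cats0.
  + exact: derives_refl.
  + move=> a al w _ IH.
    by have := @derives_ctx _ _ G [:: inr a] [::] _ _ IH; rewrite !cats0.
  + move=> B al u w _ IH1 _ IH2 /=.
    rewrite map_cat.
    apply: derives_trans (_ : derives G (map inr u ++ al) _).
      by have := @derives_ctx _ _ G [::] al _ _ IH1.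
    by have := @derives_ctx _ _ G (map inr u) [::] _ _ IH2; rewrite !cats0.
Qed.

Lemma lang_gen (N Sigma : Type) (G : grammar N Sigma) w :
  grammar_lang G w <-> gen G (start G) w.
Proof.
split => H.
  have := derives_gens H (erefl _).
  move=> Hg; inversion Hg; subst. inversion H4; subst.
  by rewrite cats0.
have [H1 _] := gen_derives G.
exact: H1.
Qed.

Definition cb (P : Prop) : bool := if excluded_middle_informative P then true else false.
Lemma cbP (P : Prop) : reflect P (cb P).
Proof. by rewrite /cb; case: excluded_middle_informative => H; constructor. Qed.

Inductive ng (X : Type) (pr : X -> nat -> seq X -> Prop) : X -> nat -> nat -> nat -> Prop :=
| ng_intro A c xs n s h : pr A c xs -> ngs pr xs n s h -> ng pr A (c + n) s.+1 h.+1
with ngs (X : Type) (pr : X -> nat -> seq X -> Prop) : seq X -> nat -> nat -> nat -> Prop :=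
| ngs_nil : ngs pr [::] 0 0 0
| ngs_cons x xs n1 s1 h1 n2 s2 h2 : ng pr x n1 s1 h1 -> ngs pr xs n2 s2 h2 ->
    ngs pr (x :: xs) (n1 + n2) (s1 + s2) (maxn h1 h2).

Scheme ng_ind2 := Induction for ng Sort Prop
with ngs_ind2 := Induction for ngs Sort Prop.

Lemma ng_intro' (X : Type) (pr : X -> nat -> seq X -> Prop) A c xs n s h n' s' h' :
  pr A c xs -> ngs pr xs n s h -> n' = c + n -> s' = s.+1 -> h' = h.+1 -> ng pr A n' s' h'.
Proof. move=> H1 H2 -> -> ->; exact: ng_intro H1 H2. Qed.

Lemma ngs_cons' (X : Type) (pr : X -> nat -> seq X -> Prop) x xs n1 s1 h1 n2 s2 h2 n s h :
  ng pr x n1 s1 h1 -> ngs pr xs n2 s2 h2 -> n = n1 + n2 -> s = s1 + s2 -> h = maxn h1 h2 ->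
  ngs pr (x :: xs) n s h.
Proof. move=> H1 H2 -> -> ->; exact: ngs_cons H1 H2. Qed.

Lemma ngE (X : Type) (pr : X -> nat -> seq X -> Prop) A n s h : ng pr A n s h ->
  exists c xs n' s' h', [/\ pr A c xs, ngs pr xs n' s' h', n = c + n', s = s'.+1 & h = h'.+1].
Proof. by case=> {A n s h} A c xs n s h H1 H2; exists c, xs, n, s, h. Qed.

Lemma ngs_consE (X : Type) (pr : X -> nat -> seq X -> Prop) x xs n s h : ngs pr (x :: xs) n s h ->
  exists n1 s1 h1 n2 s2 h2, [/\ ng pr x n1 s1 h1, ngs pr xs n2 s2 h2, n = n1 + n2, s = s1 + s2
     & h = maxn h1 h2].
Proof. by move=> H; inversion H; subst; do 6 eexists; split; eauto. Qed.

Lemma ngs_nilE (X : Type) (pr : X -> nat -> seq X -> Prop) n s h : ngs pr [::] n s h ->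
  [/\ n = 0, s = 0 & h = 0].
Proof. by move=> H; inversion H. Qed.

Lemma ngs_cat (X : Type) (pr : X -> nat -> seq X -> Prop) xs ys n1 s1 h1 n2 s2 h2 :
  ngs pr xs n1 s1 h1 -> ngs pr ys n2 s2 h2 -> ngs pr (xs ++ ys) (n1 + n2) (s1 + s2) (maxn h1 h2).
Proof.
elim: xs n1 s1 h1 => [|x xs IH] n1 s1 h1 H1 H2 /=.
  by case: (ngs_nilE H1) => -> -> ->; rewrite !add0n max0n.
have [a [b [c [d [e [f [Ha Hb -> -> ->]]]]]]] := ngs_consE H1.
apply: ngs_cons' Ha (IH _ _ _ Hb H2) _ _ _; lia.
Qed.

(* contexts: A derives e terminals plus one hole B *)
Inductive ctx (X : Type) (pr : X -> nat -> seq X -> Prop) : X -> X -> nat -> nat -> Prop :=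
| ctx_refl B : ctx pr B B 0 0
| ctx_step A c ys x zs B n1 s1 h1 e s n2 s2 h2 :
    pr A c (ys ++ x :: zs) -> ngs pr ys n1 s1 h1 -> ctx pr x B e s -> ngs pr zs n2 s2 h2 ->
    ctx pr A B (c + n1 + e + n2) (s1 + s + s2).+1.

Lemma ctx_trans (X : Type) (pr : X -> nat -> seq X -> Prop) A B C e s e' s' :
  ctx pr A B e s -> ctx pr B C e' s' -> ctx pr A C (e + e') (s + s').
Proof.
elim => {A B e s} [//|A c ys x zs B n1 s1 h1 e s n2 s2 h2 Hp Hy _ IH Hz] H.
have -> : c + n1 + e + n2 + e' = c + n1 + (e + e') + n2 by lia.
have -> : (s1 + s + s2).+1 + s' = (s1 + (s + s') + s2).+1 by lia.
exact: ctx_step Hp Hy (IH H) Hz.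
Qed.

Lemma ctx_plug (X : Type) (pr : X -> nat -> seq X -> Prop) A B e s m s' h' :
  ctx pr A B e s -> ng pr B m s' h' -> exists h, ng pr A (e + m) (s + s') h.
Proof.
elim => {A B e s} [B|A c ys x zs B n1 s1 h1 e s n2 s2 h2 Hp Hy _ IH Hz] H.
  by exists h'.
have [h H2] := IH H.
have H3 := ngs_cat Hy (ngs_cons H2 Hz).
eexists; apply: ng_intro' Hp H3 _ _ _; [lia | lia | reflexivity].
Qed.

Lemma ctx_iter (X : Type) (pr : X -> nat -> seq X -> Prop) C e s k :
  ctx pr C C e s -> ctx pr C C (k * e) (k * s).
Proof.
move=> H; elim: k => [|k IH]; first exact: ctx_refl.
by rewrite !mulSn; apply: ctx_trans H IH.
Qed.

Lemma ngs_split_max (X : Type) (pr : X -> nat -> seq X -> Prop) xs n s h :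
  ngs pr xs n s h -> 0 < h ->
  exists ys x zs n1 s1 h1 m s2 n3 s3 h3,
    [/\ xs = ys ++ x :: zs, ngs pr ys n1 s1 h1, ng pr x m s2 h, ngs pr zs n3 s3 h3
      & n = n1 + m + n3 /\ s = s1 + s2 + s3].
Proof.
elim: xs n s h => [|x xs IH] n s h H.
  by case: (ngs_nilE H) => _ _ ->.
have [n1 [s1 [h1 [n2 [s2 [h2 [H1 H2 -> -> ->]]]]]]] := ngs_consE H.
case: (leqP h2 h1) => Hle hp.
  by exists [::], x, xs, 0, 0, 0, n1, s1, n2, s2, h2; split; [done|exact: ngs_nil|done|done|lia].
have [ys [y [zs [m1 [t1 [k1 [m [t2 [m3 [t3 [k3 [-> Hy Hx Hz [-> ->]]]]]]]]]]]]] := IH _ _ _ H2 hp.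
exists (x :: ys), y, zs, (n1 + m1), (s1 + t1), (maxn h1 k1), m, t2, m3, t3, k3.
split => //; first exact: ngs_cons.
lia.
Qed.

Lemma ctx_one (X : Type) (pr : X -> nat -> seq X -> Prop) A c ys x zs n1 s1 h1 n3 s3 h3 :
  pr A c (ys ++ x :: zs) -> ngs pr ys n1 s1 h1 -> ngs pr zs n3 s3 h3 ->
  ctx pr A x (c + n1 + n3) (s1 + s3).+1.
Proof.
move=> Hp Hy Hz.
have := ctx_step Hp Hy (ctx_refl pr x) Hz.
by rewrite addn0 addn0.
Qed.

(* descend along a maximal-height branch *)
Lemma descend (X : Type) (pr : X -> nat -> seq X -> Prop) g h A n s :
  ng pr A n s h -> 0 < g -> g <= h ->
  exists B e s1 m s2, [/\ ctx pr A B e s1, ng pr B m s2 g, n = e + m & s = s1 + s2].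
Proof.
elim: h A n s => [|h IH] A n s H g0 gh; first by lia.
case: (ltngtP g h.+1) => [gh'| |E]; last 2 first.
- by lia.
- by subst; exists A, 0, 0, n, s; split => //; apply: ctx_refl.
have [c [xs [n' [s' [h' [Hp Hs En Es Eh]]]]]] := ngE H.
case: Eh => Eh; subst h'.
have [ys [x [zs [n1 [s1 [h1 [m [s2 [n3 [s3 [h3 [Exs Hy Hx Hz [En' Es']]]]]]]]]]]]] :=
  ngs_split_max Hs (leq_trans g0 (gh')).
subst xs.
have Hc := ctx_one Hp Hy Hz.
have [B [e [t1 [m' [t2 [Hc' Hb Em Et]]]]]] := IH _ _ _ Hx g0 gh'.
exists B, (c + n1 + n3 + e), ((s1 + s3).+1 + t1), m', t2; split => //.
- exact: ctx_trans Hc Hc'.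
- lia.
- lia.
Qed.

Definition Found (X : Type) (pr : X -> nat -> seq X -> Prop) B m s :=
  exists C e1 s1 e2 s2 m3 s3 h3, [/\ ctx pr B C e1 s1, ctx pr C C e2 s2, 0 < s2,
     ng pr C m3 s3 h3 & m = e1 + e2 + m3 /\ s = s1 + s2 + s3].

Lemma rep (X : finType) (pr : X -> nat -> seq X -> Prop) g :
  forall (V : {set X}) B m s, ng pr B m s g -> #|X| < #|V| + g ->
  Found pr B m s \/
  exists C e1 s1 m3 s3 h3, [/\ C \in V, ctx pr B C e1 s1, ng pr C m3 s3 h3, m = e1 + m3
                           & s = s1 + s3].
Proof.
elim: g => [|g IH] V B m s H Hc.
  by have := max_card V; lia.
case: (boolP (B \in V)) => HB.
  by right; exists B, 0, 0, m, s, g.+1; split => //; apply: ctx_refl.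
have HV : #|B |: V| = #|V|.+1 by rewrite cardsU1 HB.
have := max_card (B |: V); rewrite HV => HV'.
have g0 : 0 < g by lia.
have [c [xs [n' [s' [h' [Hp Hs En Es Eh]]]]]] := ngE H.
case: Eh => Eh; subst h'.
have [ys [x [zs [n1 [s1 [h1 [m2 [s2 [n3 [s3 [h3 [Exs Hy Hx Hz [En' Es']]]]]]]]]]]]] :=
  ngs_split_max Hs g0.
subst xs.
have Hc0 := ctx_one Hp Hy Hz.
case: (IH (B |: V) x m2 s2 Hx ltac:(lia)).
  move=> [C [e1 [t1 [e2 [t2 [m3 [t3 [k3 [H1 H2 H3 H4 [E1 E2]]]]]]]]]].
  left; exists C, (c + n1 + n3 + e1), ((s1 + s3).+1 + t1), e2, t2, m3, t3, k3; split => //.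
  - exact: ctx_trans Hc0 H1.
  - split; lia.
move=> [C [e1 [t1 [m3 [t3 [k3 [HC H1 H2 E1 E2]]]]]]].
move: HC; rewrite in_setU1 => /orP [/eqP EC | HC].
  subst C.
  left; exists B, 0, 0, (c + n1 + n3 + e1), ((s1 + s3).+1 + t1), m3, t3, k3; split => //.
  - exact: ctx_refl.
  - exact: ctx_trans Hc0 H1.
  - split; lia.
right; exists C, (c + n1 + n3 + e1), ((s1 + s3).+1 + t1), m3, t3, k3; split => //.
- exact: ctx_trans Hc0 H1.
- lia.
- lia.
Qed.

Lemma ng_bound (X : Type) (pr : X -> nat -> seq X -> Prop) C :
  (forall A c xs, pr A c xs -> c <= C /\ size xs <= C) ->
  (forall A n s h, ng pr A n s h -> n <= (C.*2.+1) ^ h) /\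
  (forall xs n s h, ngs pr xs n s h -> n <= size xs * (C.*2.+1) ^ h).
Proof.
move=> HC.
have mono : forall a b, a <= b -> (C.*2.+1) ^ a <= (C.*2.+1) ^ b.
  by move=> a b ab; apply: leq_pexp2l.
have pos : forall a, 0 < (C.*2.+1) ^ a by move=> a; rewrite expn_gt0.
suff H : (forall A n s h, ng pr A n s h -> n <= (C.*2.+1) ^ h) /\
  (forall xs n s h, ngs pr xs n s h -> n <= size xs * (C.*2.+1) ^ h) by [].
split.
- apply: (@ng_ind2 X pr (fun A n s h _ => n <= (C.*2.+1) ^ h)
     (fun xs n s h _ => n <= size xs * (C.*2.+1) ^ h)).
  + move=> A c xs n s h Hp _ IH.
    have [h1 h2] := HC _ _ _ Hp.
    have := pos h.
    rewrite expnS.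
    move: ((C.*2.+1) ^ h) IH => Y IH HY.
    have := leq_mul h2 (leqnn Y).
    nia.
  + by [].
  + move=> x xs n1 s1 h1 n2 s2 h2 _ IH1 _ IH2 /=.
    have := mono h1 (maxn h1 h2) (leq_maxl _ _).
    have := mono h2 (maxn h1 h2) (leq_maxr _ _).
    have := leq_mul (leqnn (size xs)) (mono h2 (maxn h1 h2) (leq_maxr _ _)).
    move: ((C.*2.+1) ^ maxn h1 h2) => Y. nia.
- apply: (@ngs_ind2 X pr (fun A n s h _ => n <= (C.*2.+1) ^ h)
     (fun xs n s h _ => n <= size xs * (C.*2.+1) ^ h)).
  + move=> A c xs n s h Hp _ IH.
    have [h1 h2] := HC _ _ _ Hp.
    have := pos h.
    rewrite expnS.
    move: ((C.*2.+1) ^ h) IH => Y IH HY.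
    have := leq_mul h2 (leqnn Y).
    nia.
  + by [].
  + move=> x xs n1 s1 h1 n2 s2 h2 _ IH1 _ IH2 /=.
    have := mono h1 (maxn h1 h2) (leq_maxl _ _).
    have := mono h2 (maxn h1 h2) (leq_maxr _ _).
    have := leq_mul (leqnn (size xs)) (mono h2 (maxn h1 h2) (leq_maxr _ _)).
    move: ((C.*2.+1) ^ maxn h1 h2) => Y. nia.
Qed.

Definition NG (X : Type) (pr : X -> nat -> seq X -> Prop) A n := exists s h, ng pr A n s h.

Lemma pump (X : finType) (pr : X -> nat -> seq X -> Prop) C :
  (forall A c xs, pr A c xs -> c <= C /\ size xs <= C) ->
  exists T p, 0 < p /\ forall A n, NG pr A n -> T < n -> NG pr A (n + p).
Proof.
move=> HC.
have [B1 _] := ng_bound HC.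
set K := C.*2.+1.
set T := K ^ #|X|.+1.
exists T, T`!; split; first exact: fact_gt0.
move=> A n HN Tn.
have ex : exists s, cb (exists h, ng pr A n s h).
  by case: HN => s [h H]; exists s; apply/cbP; exists h.
case: (ex_minnP ex) => s0 /cbP [h H] Hmin.
have hbig : #|X|.+1 <= h.
  rewrite leqNgt; apply/negP => hl.
  have := B1 _ _ _ _ H.
  have := @leq_pexp2l K h #|X|.+1 isT (ltnW hl).
  move: Tn; rewrite /T /K; lia.
have [B [e [s1 [m [s2 [Hc Hb En Es]]]]]] := descend H (ltn0Sn _) hbig.
have mT : m <= T := B1 _ _ _ _ Hb.
have Hcard : #|X| < #|(set0 : {set X})| + #|X|.+1 by rewrite cards0.
have [HF|HR] := @rep X pr #|X|.+1 set0 B m s2 Hb Hcard; last first.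
  by move: HR => [C' [a1 [a2 [a3 [a4 [a5 [HC' _]]]]]]]; rewrite inE in HC'.
move: HF => [C' [e1 [t1 [e2 [t2 [m3 [t3 [k3 [H1 H2 H3 H4 [E1 E2]]]]]]]]]].
have HAC := ctx_trans Hc H1.
case: (posnP e2) => e2p.
  have [h' Hs] := ctx_plug HAC H4.
  have Hng : ng pr A n (s1 + t1 + t3) h'.
    by have -> : n = e + e1 + m3 by lia.
  have Hle := Hmin _ (introT (cbP _) (ex_intro _ h' Hng)).
  exfalso; lia.
have dv : e2 %| T`! by apply: dvdn_fact; rewrite e2p /=; lia.
have Hit := ctx_iter (T`! %/ e2).+1 H2.
have [h' Hs] := ctx_plug (ctx_trans HAC Hit) H4.
exists (s1 + t1 + (T`! %/ e2).+1 * t2 + t3), h'.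
have -> : n + T`! = e + e1 + (T`! %/ e2).+1 * e2 + m3.
  rewrite mulSn divnK //; lia.
exact: Hs.
Qed.

Definition terms (N Sigma : Type) (al : seq (N + Sigma)) :=
  count (fun x => if x is inr _ then true else false) al.
Definition nonterms (N Sigma : Type) (al : seq (N + Sigma)) :=
  pmap (fun x => if x is inl B then Some B else None) al.

Definition prodG (N Sigma : finType) (G : grammar N Sigma) :
  (N + (Sigma * N))%type -> nat -> seq (N + (Sigma * N))%type -> Prop :=
  fun x c xs => match x with
  | inl A => exists alpha, [/\ List.In (A, alpha) (productions G), c = terms alpha
                             & xs = map inl (nonterms alpha)]
  | inr (b, A) => exists alpha beta y gamma,
      [/\ List.In (A, alpha) (productions G), alpha = beta ++ y :: gamma,
          (forall B, B \in nonterms beta -> exists u, gen G B u) &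
          ((y = inr b /\ c = (terms gamma).+1 /\ xs = map inl (nonterms gamma)) \/
           (exists B, [/\ y = inl B, c = terms gamma & xs = inr (b, B) :: map inl (nonterms gamma)]))]
  end.

Definition GoalG (N Sigma : finType) (G : grammar N Sigma) (x : (N + (Sigma * N))%type) n : Prop :=
  match x with
  | inl A => exists w, gen G A w /\ size w = n
  | inr (b, A) => exists w i, [/\ gen G A w, i < size w, nth b w i = b & n = size w - i]
  end.

Fixpoint all_goal (N Sigma : finType) (G : grammar N Sigma) (xs : seq (N + (Sigma * N))%type) n
  : Prop :=
  match xs with
  | [::] => n = 0
  | x :: xs' => exists n1 n2, [/\ n = n1 + n2, GoalG G x n1 & all_goal G xs' n2]
  end.

Lemma all_goal_words (N Sigma : finType) (G : grammar N Sigma) al n :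
  all_goal G (map inl (nonterms al)) n -> exists w, gens G al w /\ size w = terms al + n.
Proof.
elim: al n => [|[B|a] al IH] n /=.
- by move=> ->; exists [::]; split => //; apply: gens_nil.
- move=> [n1 [n2 [-> [u [Hu Su]] H2]]].
  have [w [Hw Sw]] := IH _ H2.
  exists (u ++ w); split; first exact: gens_n.
  rewrite size_cat Su Sw /terms /=; lia.
- move=> H; have [w [Hw Sw]] := IH _ H.
  exists (a :: w); split; first exact: gens_t.
  rewrite /= Sw /terms /=; lia.
Qed.

Lemma productive_words (N Sigma : finType) (G : grammar N Sigma) be :
  (forall B, B \in nonterms be -> exists u, gen G B u) -> exists w, gens G be w.
Proof.
elim: be => [|[B|a] be IH] H.
- by exists [::]; apply: gens_nil.
- have [u Hu] := H B ltac:(by rewrite /nonterms /= inE eqxx).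
  have [w Hw] := IH (fun B' HB' => H B' ltac:(rewrite /nonterms /= inE; apply/orP; right; exact: HB')).
  by exists (u ++ w); apply: gens_n.
- have [w Hw] := IH H.
  by exists (a :: w); apply: gens_t.
Qed.

Lemma ng_goal (N Sigma : finType) (G : grammar N Sigma) x n s h :
  ng (prodG G) x n s h -> GoalG G x n.
Proof.
move=> H.
apply: (@ng_ind2 _ (prodG G) (fun x n s h _ => GoalG G x n) (fun xs n s h _ => all_goal G xs n))
  H.
- move=> [A|[b A]] c xs n' s' h' Hp _ IH.
  + case: Hp => alpha [Hin Ec Ex]; subst c xs.
    have [w [Hw Sw]] := all_goal_words IH.
    by exists w; split => //; exact: gen_intro Hin Hw.
  + case: Hp => alpha [beta [y [gamma [Hin Eal Hprod Hc]]]].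
    have [wb Hwb] := productive_words Hprod.
    case: Hc => [[Ey [Ec Ex]] | [B [Ey Ec Ex]]]; subst y c xs.
    * have [wg [Hwg Swg]] := all_goal_words IH.
      exists (wb ++ b :: wg), (size wb); split.
      -- apply: gen_intro Hin _; rewrite Eal; apply: gens_cat => //; exact: gens_t.
      -- by rewrite size_cat /=; lia.
      -- by rewrite nth_cat ltnn subnn.
      -- by rewrite size_cat /= Swg; lia.
    * move: IH => /= [n1 [n2 [-> [u [i [Hu Hi Hn ->]]] H2]]].
      have [wg [Hwg Swg]] := all_goal_words H2.
      exists (wb ++ u ++ wg), (size wb + i); split.
      -- apply: gen_intro Hin _; rewrite Eal; apply: gens_cat => //; exact: gens_n.
      -- by rewrite !size_cat; lia.
      -- by rewrite nth_cat ltnNge leq_addr /= addKn nth_cat Hi.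
      -- by rewrite !size_cat Swg; lia.
- by [].
- move=> x' xs n1 s1 h1 n2 s2 h2 _ IH1 _ IH2 /=.
  by exists n1, n2.
Qed.

Definition Pgen (N Sigma : finType) (G : grammar N Sigma) A w :=
  NG (prodG G) (inl A) (size w) /\
  forall b i, i < size w -> nth b w i = b -> NG (prodG G) (inr (b, A)) (size w - i).

Definition Pgens (N Sigma : finType) (G : grammar N Sigma) al w :=
  (exists n s h, ngs (prodG G) (map inl (nonterms al)) n s h /\ size w = terms al + n) /\
  forall b i, i < size w -> nth b w i = b ->
    exists be y ga, [/\ al = be ++ y :: ga, (forall B, B \in nonterms be -> exists u, gen G B u) &
      ((y = inr b /\ exists n s h, ngs (prodG G) (map inl (nonterms ga)) n s h /\
            size w - i = (terms ga).+1 + n) \/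
       (exists B j s h n' s' h', [/\ y = inl B, ng (prodG G) (inr (b, B)) j s h,
            ngs (prodG G) (map inl (nonterms ga)) n' s' h' & size w - i = terms ga + (j + n')]))].

Lemma words_ng (N Sigma : finType) (G : grammar N Sigma) :
  forall A w, gen G A w -> Pgen G A w.
Proof.
apply: (@gen_ind2 N Sigma G (fun A w _ => Pgen G A w) (fun al w _ => Pgens G al w)).
- move=> A alpha w Hin _ [[n [s [h [Hs Sw]]]] IH2]; split.
    exists s.+1, h.+1; rewrite Sw; apply: ng_intro Hs.
    by exists alpha; split.
  move=> b i Hi Hb.
  have [be [y [ga [Eal Hprod Hc]]]] := IH2 b i Hi Hb.
  case: Hc => [[Ey [n' [s' [h' [Hs' E]]]]] | [B [j [s1 [h1 [n' [s' [h' [Ey Hj Hs' E]]]]]]]]].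
  + exists s'.+1, h'.+1; rewrite E; apply: ng_intro Hs'.
    exists alpha, be, y, ga; split => //; left; split => //.
  + exists (s1 + s').+1, (maxn h1 h').+1; rewrite E; apply: ng_intro (ngs_cons Hj Hs').
    exists alpha, be, y, ga; split => //; right; exists B; split => //.
- split.
    by exists 0, 0, 0; split => //; apply: ngs_nil.
  by [].
- move=> a al w _ [[n [s [h [Hs Sw]]]] IH2]; split.
    by exists n, s, h; split => //; rewrite /= Sw /terms /=; lia.
  move=> b [|i] Hi Hb.
    exists [::], (inr a), al; split => //; left.
    move: Hb => /= ->; split => //.
    by exists n, s, h; split => //; rewrite /= Sw subn0.
  have [be [y [ga [Eal Hprod Hc]]]] := IH2 b i Hi Hb.
  exists (inr a :: be), y, ga; split => //.
  + by rewrite Eal.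
- move=> B al u w Hu [IHu1 IHu2] _ [[n [s [h [Hs Sw]]]] IH2]; split.
    case: IHu1 => s1 [h1 Hu1].
    exists (size u + n), (s1 + s), (maxn h1 h); split.
      exact: ngs_cons Hu1 Hs.
    by rewrite size_cat Sw /terms /=; lia.
  move=> b i Hi Hb.
  case: (ltnP i (size u)) => Hiu.
    have [s1 [h1 Hu1]] := IHu2 b i Hiu ltac:(by rewrite nth_cat Hiu in Hb).
    exists [::], (inl B), al; split => //; right.
    exists B, (size u - i), s1, h1, n, s, h; split => //.
    by rewrite size_cat Sw; lia.
  have Hi' : i - size u < size w by rewrite size_cat in Hi; lia.
  have Hb' : nth b w (i - size u) = b by rewrite nth_cat ltnNge Hiu in Hb.
  have [be [y [ga [Eal Hprod Hc]]]] := IH2 b _ Hi' Hb'.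
  exists (inl B :: be), y, ga; split.
  + by rewrite Eal.
  + move=> B'; rewrite /nonterms /= inE => /orP [/eqP -> | HB']; first by exists u.
    exact: Hprod.
  + have E : size (u ++ w) - i = size w - (i - size u) by rewrite size_cat; lia.
    by rewrite E.
Qed.

Definition summ (Sigma : finType) (L : lang Sigma) :=
  exists (Q : finType) (s : seq Sigma -> Q) (d : Q -> Sigma -> Q),
    (forall u a, s (rcons u a) = d (s u) a) /\ (forall u v, s u = s v -> L u -> L v).

Lemma summ_regular (Sigma : finType) (L : lang Sigma) : summ L -> regular L.
Proof.
move=> [Q [s [d [Hs Hinv]]]].
exists Q, d, (s [::]), (fun q => cb (exists u, s u = q /\ L u)).
have Hf : forall u v, foldl d (s u) v = s (u ++ v).
  move=> u v; elim: v u => [|a v IH] u /=; first by rewrite cats0.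
  by rewrite -Hs IH cat_rcons.
move=> w; rewrite Hf /=; split.
  by move=> Hw; apply/cbP; exists w.
by move=> /cbP [u [Eu Hu]]; exact: Hinv Eu Hu.
Qed.

Lemma summ_and (Sigma : finType) (L1 L2 : lang Sigma) :
  summ L1 -> summ L2 -> summ (fun w => L1 w /\ L2 w).
Proof.
move=> [Q1 [s1 [d1 [H1 I1]]]] [Q2 [s2 [d2 [H2 I2]]]].
exists (Q1 * Q2)%type, (fun u => (s1 u, s2 u)), (fun q a => (d1 q.1 a, d2 q.2 a)); split.
  by move=> u a; rewrite H1 H2.
by move=> u v [E1 E2] [Hu1 Hu2]; split; [exact: I1 E1 Hu1 | exact: I2 E2 Hu2].
Qed.

Lemma summ_ext (Sigma : finType) (L1 L2 : lang Sigma) :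
  (forall w, L1 w <-> L2 w) -> summ L1 -> summ L2.
Proof.
move=> E [Q [s [d [H I]]]]; exists Q, s, d; split => // u v Euv /E Hu.
by apply/E; exact: I Euv Hu.
Qed.

Definition vpow (Sigma : Type) (v : seq Sigma) n := flatten (nseq n v).

Lemma vpowSr (Sigma : Type) (v : seq Sigma) n : vpow v n.+1 = vpow v n ++ v.
Proof.
rewrite /vpow /=; elim: n => [|n IH] /=; first by rewrite cats0.
by rewrite -catA -IH.
Qed.

Lemma vpow_nil (Sigma : Type) n : vpow ([::] : seq Sigma) n = [::].
Proof. by rewrite /vpow; elim: n. Qed.

Lemma vstep (Sigma : Type) (v : seq Sigma) u a :
  (exists n, rcons u a = vpow v n) <->
  exists k : 'I_(size v), [/\ val k = (size v).-1, exists n, u = vpow v n ++ take k v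
                           & a = nth a v k].
Proof.
split.
  move=> [[|n] E]; first by move: E; rewrite /vpow /=; case: u.
  have vpos : 0 < size v.
    case: v E => [|? ?] //; rewrite vpow_nil.
    by case: u.
  have Hk : (size v).-1 < size v by lia.
  have Ev : v = rcons (take (size v).-1 v) (nth a v (size v).-1).
    by rewrite -take_nth // prednK // take_size.
  move: E; rewrite vpowSr [X in vpow v n ++ X]Ev -rcons_cat => /rcons_inj [Eu Ea].
  exists (Ordinal Hk); split => //.
  by exists n; rewrite Eu.
move=> [k [Ek [n ->] ->]].
exists n.+1.
rewrite vpowSr rcons_cat -take_nth //.
have -> : k.+1 = size v by rewrite Ek prednK //; have := ltn_ord k; lia.
by rewrite take_size.
Qed.

Lemma vstep2 (Sigma : Type) (v : seq Sigma) u a k :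
  k.+1 < size v ->
  (exists n, rcons u a = vpow v n ++ take k.+1 v) <->
  ((exists n, u = vpow v n ++ take k v) /\ a = nth a v k).
Proof.
move=> Hk.
rewrite (take_nth a (ltnW Hk)).
split.
  move=> [n]; rewrite -rcons_cat => /rcons_inj [Eu Ea].
  by split; [exists n; rewrite Eu | exact: Ea].
by move=> [[n Eu] Ea]; exists n; rewrite Eu rcons_cat -Ea.
Qed.

Lemma summ_star (Sigma : finType) (L : lang Sigma) (v : seq Sigma) :
  summ L -> summ (fun w => exists n w', w = vpow v n ++ w' /\ L w').
Proof.
move=> [Q [s [d [Hs Hinv]]]].
pose F1 u := [ffun k : 'I_(size v) => cb (exists n, u = vpow v n ++ take k v)].
pose S2 u := [set q : Q | cb (exists n x, u = vpow v n ++ x /\ s x = q)].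
pose E' (F : {ffun 'I_(size v) -> bool}) a :=
  [exists k : 'I_(size v), [&& val k == (size v).-1, F k & a == nth a v k]].
pose d' (q : ({ffun 'I_(size v) -> bool} * {set Q})%type) a :=
  ([ffun k : 'I_(size v) => if val k == 0 then E' q.1 a else
     [exists k' : 'I_(size v), [&& (val k').+1 == val k, q.1 k' & a == nth a v k']]],
   [set q' | [exists q'' in q.2, q' == d q'' a] || (E' q.1 a && (q' == s [::]))]).
have HE : forall u a, (exists n, rcons u a = vpow v n) <-> E' (F1 u) a.
  move=> u a; rewrite vstep; split.
    move=> [k [Ek Hn Ea]]; apply/existsP; exists k.
    apply/and3P; split; [exact/eqP | | exact/eqP].
    by rewrite /F1 ffunE; apply/cbP.
  move=> /existsP [k /and3P [/eqP Ek Hk /eqP Ea]].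
  by exists k; split => //; move: Hk; rewrite /F1 ffunE => /cbP.
exists ({ffun 'I_(size v) -> bool} * {set Q})%type, (fun u => (F1 u, S2 u)), d'; split.
  move=> u a; congr pair.
    apply/ffunP => k; rewrite !ffunE /=.
    case: (altP (val k =P 0)) => Hk0 /=.
      apply/idP/idP.
        move=> /cbP [n]; rewrite Hk0 take0 cats0 => En.
        by apply/HE; exists n.
      by move=> /HE [n En]; apply/cbP; exists n; rewrite Hk0 take0 cats0.
    have Hk : (val k).-1.+1 < size v by rewrite prednK ?ltn_ord //; lia.
    have Ek : val k = (val k).-1.+1 by lia.
    apply/idP/idP.
      move=> /cbP; rewrite Ek (vstep2 u a Hk) => [[[n En] Ea]].
      have Hk' : (val k).-1 < size v by lia.
      apply/existsP; exists (Ordinal Hk') => /=.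
      apply/and3P; split; [apply/eqP; lia | | exact/eqP].
      by rewrite /F1 ffunE; apply/cbP; exists n.
    move=> /existsP [k' /and3P [/eqP Ek' Hk' /eqP Ea]].
    have E2 : (val k).-1 = k' by move: Ek'; case: k {Hk0 Hk Ek} => kk ? /= <-.
    apply/cbP; rewrite Ek (vstep2 u a Hk) E2; split; last exact: Ea.
    by move: Hk'; rewrite /F1 ffunE => /cbP [n En]; exists n.
  apply/setP => q; rewrite !inE /=.
  apply/idP/idP.
    move=> /cbP [n [x [Ex Eq]]].
    case/lastP: x Ex Eq => [|x b] Ex Eq.
      rewrite cats0 in Ex.
      apply/orP; right; rewrite -Eq eqxx andbT.
      by apply/HE; exists n.
    move: Ex; rewrite -rcons_cat => /rcons_inj [Eu Eb]; subst u b.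
    apply/orP; left; apply/existsP; exists (s x).
    rewrite inE -Eq Hs eqxx andbT.
    by apply/cbP; exists n, x.
  move=> /orP [/existsP [q'' /andP [Hq'' /eqP ->]] | /andP [/HE [n En] /eqP ->]].
    move: Hq''; rewrite inE => /cbP [n [x [Ex Eq]]].
    apply/cbP; exists n, (rcons x a); split; first by rewrite Ex rcons_cat.
    by rewrite Hs Eq.
  by apply/cbP; exists n, [::]; rewrite cats0.
move=> u u' [_ E2] [n [x [Ex Hx]]].
have : s x \in S2 u by rewrite inE; apply/cbP; exists n, x.
rewrite E2 inE => /cbP [n' [x' [Ex' Eq]]].
exists n', x'; split => //.
by apply: Hinv Hx; rewrite Eq.
Qed.

Lemma in_star_prod_cons (Sigma : Type) (v : seq Sigma) ws w :
  in_star_prod (v :: ws) w <-> exists n w', w = vpow v n ++ w' /\ in_star_prod ws w'.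
Proof.
split.
  move=> [[|n ns] [/= Hs Ew]] //.
  exists n, (flatten (map (fun p => flatten (nseq p.2 p.1)) (zip ws ns))); split => //.
  by exists ns; split => //; case: Hs.
move=> [n [w' [-> [ns [Hs ->]]]]].
by exists (n :: ns); split => //=; rewrite Hs.
Qed.

Lemma summ_in_star_prod (Sigma : finType) (ws : seq (seq Sigma)) : summ (in_star_prod ws).
Proof.
elim: ws => [|v ws IH].
  exists bool, (fun u => nilp u), (fun _ _ => false); split.
    by move=> u a; case: u.
  move=> u u' E [ns [Hs Eu]]; exists [::]; split => //.
  by move: Hs E; rewrite {}Eu; case: ns => //= _; case: u'.
apply: summ_ext (summ_star v IH) => w.
by rewrite in_star_prod_cons.
Qed.

Definition maxsize (N Sigma : Type) (P : seq (N * seq (N + Sigma))) :=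
  foldr (fun p m => maxn (size p.2) m) 0 P.

Lemma In_size (N Sigma : Type) (P : seq (N * seq (N + Sigma))) A al :
  List.In (A, al) P -> size al <= maxsize P.
Proof.
elim: P => [|[B be] P IH] //= [E|H].
  by case: E => _ ->; apply: leq_maxl.
exact: leq_trans (IH H) (leq_maxr _ _).
Qed.

Lemma nonterms_size (N Sigma : Type) (al : seq (N + Sigma)) : size (nonterms al) <= size al.
Proof. by elim: al => [|[B|a] al IH] //=; rewrite /nonterms /= -/(nonterms al) //=; lia. Qed.

Lemma terms_size (N Sigma : Type) (al : seq (N + Sigma)) : terms al <= size al.
Proof. exact: count_size. Qed.

Lemma prodG_bound (N Sigma : finType) (G : grammar N Sigma) x c xs :
  prodG G x c xs -> c <= (maxsize (productions G)).+1 /\ size xs <= (maxsize (productions G)).+1.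
Proof.
case: x => [A|[b A]] /=.
  move=> [al [Hin -> ->]]; have := In_size Hin.
  rewrite size_map; have := terms_size al; have := nonterms_size al.
  lia.
move=> [al [be [y [ga [Hin Eal _ Hc]]]]]; have := In_size Hin.
rewrite Eal size_cat /= => Hs.
have := terms_size ga; have := nonterms_size ga.
case: Hc => [[_ [-> ->]] | [B [_ -> ->]]];
  rewrite /= ?size_map; lia.
Qed.

Lemma iter_p (I : Type) (P : I -> nat -> Prop) T p :
  (forall i n, T < n -> P i n -> P i (n + p)) -> forall k i n, T < n -> P i n -> P i (n + k * p).
Proof.
move=> H; elim=> [|k IH] i n Tn Hn; first by rewrite addn0.
rewrite mulSn addnCA addnC; apply: H; [exact: leq_trans Tn (leq_addr _ _) | exact: IH].
Qed.

Lemma list_bound (A : eqType) (F : A -> nat -> Prop) (l : seq A) :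
  (forall x b b', b <= b' -> F x b -> F x b') -> (forall x, exists b, F x b) ->
  exists b, forall x, x \in l -> F x b.
Proof.
move=> Hm He; elim: l => [|y l [b Hb]]; first by exists 0.
have [b' Hb'] := He y.
exists (maxn b b') => x; rewrite inE => /orP [/eqP -> | Hx].
  exact: Hm (leq_maxr _ _) Hb'.
exact: Hm (leq_maxl _ _) (Hb _ Hx).
Qed.

Lemma evper (I : finType) (P : I -> nat -> Prop) T p :
  0 < p -> (forall i n, T < n -> P i n -> P i (n + p)) ->
  exists T', T < T' /\ forall i n m, T' <= n -> T' <= m -> n %% p = m %% p -> P i n -> P i m.
Proof.
move=> p0 H.
pose F (x : (I * 'I_p)%type) b := (exists n, [/\ T < n, n %% p = x.2 & P x.1 n]) ->
  exists n, [/\ T < n, n <= b, n %% p = x.2 & P x.1 n].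
have [B HB] : exists B, forall x, x \in enum {: I * 'I_p} -> F x B.
  apply: list_bound.
    move=> x b b' bb' Hb Hx; have [n [H1 H2 H3 H4]] := Hb Hx.
    by exists n; split => //; exact: leq_trans H2 bb'.
  move=> x; case: (excluded_middle_informative (exists n, [/\ T < n, n %% p = x.2 & P x.1 n])).
    by move=> [n Hn]; exists n => _; exists n; case: Hn => *; split.
  by move=> Hn; exists 0 => /Hn.
exists (maxn B T).+1; split; first lia.
move=> i n m Hn Hm Enm Hi.
have Hr : n %% p < p by rewrite ltn_pmod.
have Hw : exists n', [/\ T < n', n' %% p = (i, Ordinal Hr).2 & P (i, Ordinal Hr).1 n'].
  by exists n; split => //; lia.
have [n0 [T0 B0 E0 P0]] := HB (i, Ordinal Hr) (mem_enum _ _) Hw.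
rewrite /= in E0 P0.
have n0m : n0 <= m by lia.
have Hd : p %| m - n0 by rewrite -(eqn_mod_dvd p n0m); apply/eqP; rewrite E0 Enm.
have -> : m = n0 + (m - n0) %/ p * p by rewrite divnK //; lia.
exact: iter_p H _ i n0 T0 P0.
Qed.

Definition nxt (T q c : nat) := if c.+1 < T + q then c.+1 else T.
Fixpoint ctr (T q n : nat) : nat :=
  match n with 0 => 0 | n'.+1 => nxt T q (ctr T q n') end.

Lemma ctr_inv T q n : 0 < q ->
  [/\ ctr T q n < T + q, (n < T -> ctr T q n = n)
    & (T <= n -> T <= ctr T q n /\ ctr T q n %% q = n %% q)].
Proof.
move=> q0; elim: n => [|n [IH1 IH2 IH3]] /=.
  by split; [lia | done | move=> H; split].
rewrite /nxt.
case: (ltnP n.+1 T) => HnT.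
  rewrite IH2; last lia.
  have -> : n.+1 < T + q = true by apply/idP; lia.
  by split => //; lia.
case: (ltnP n T) => HnT'.
  have E : T = n.+1 by lia.
  rewrite IH2 // -E.
  have -> : T < T + q = true by apply/idP; lia.
  by split => //; lia.
have [J1 J2] := IH3 HnT'.
case: ifP => Hc.
  split; [lia | lia | move=> _; split; first lia].
  by rewrite -addn1 -modnDml J2 modnDml addn1.
split; [lia | lia | move=> _; split => //].
have E : (ctr T q n).+1 = T + q by lia.
by rewrite -{1}(modnDr T q) -E -addn1 -modnDml J2 modnDml addn1.
Qed.

Lemma ctr_equiv (I : finType) (P : I -> nat -> Prop) T T' q :
  0 < q -> T < T' ->
  (forall i n m, T' <= n -> T' <= m -> n %% q = m %% q -> P i n -> P i m) ->
  forall i n, P i n <-> P i (ctr T' q n).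
Proof.
move=> q0 TT H i n.
have [I1 I2 I3] := ctr_inv T' n q0.
case: (ltnP n T') => Hn; first by rewrite I2.
have [J1 J2] := I3 Hn.
by split; apply: H.
Qed.

Fixpoint psum (Sigma : Type) (w : seq Sigma) : seq (Sigma * nat) :=
  match w with [::] => [::] | a :: w' => (a, (size w').+1) :: psum w' end.

Lemma Psi_psum (Sigma : eqType) (w : seq Sigma) x : Psi w x <-> x \in psum w.
Proof.
elim: w x => [|a w IH] x /=.
  by split => // [[i]].
rewrite in_cons; split.
  move=> [[|i] Hi ->] /=; first by rewrite subn0 eqxx.
  apply/orP; right; apply/IH; exists i => //.
  by congr pair; rewrite ?subSS //; apply: set_nth_default.
case/orP => [/eqP -> | Hx].
  by exists 0 => //=; rewrite subn0.
have [i Hi Ex] := proj2 (IH x) Hx.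
by exists i.+1 => //; rewrite Ex /=.
Qed.

Lemma psum_rcons (Sigma : Type) (w : seq Sigma) a :
  psum (rcons w a) = rcons (map (fun x => (x.1, x.2.+1)) (psum w)) (a, 1).
Proof. by elim: w => [|b w IH] //=; rewrite IH size_rcons. Qed.

Lemma reg_main (Sigma N : finType) (G : grammar N Sigma) (K : lang Sigma) ws :
  (forall w, K w <-> grammar_lang G w) ->
  regular (fun w => [/\ in_star_prod ws w, lengths K (size w) & forall x, Psi w x -> PsiL K x]).
Proof.
move=> HK.
have [T [p [p0 Hp]]] := pump (@prodG_bound N Sigma G).
have [T' [TT' Hper]] := evper (P := NG (prodG G)) p0 (fun i n h1 h2 => Hp i n h2 h1).
have Heq := ctr_equiv p0 TT' Hper.
set S := start G.
set M := (T' + p).-1.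
have ctr_lt : forall n, ctr T' p n < M.+1.
  by move=> n; have [H _ _] := ctr_inv T' n p0; rewrite /M; lia.
have nxt_lt : forall c, nxt T' p c < M.+1.
  by move=> c; rewrite /nxt /M; case: ifP; lia.
have HL : forall n, lengths K n <-> NG (prodG G) (inl S) n.
  move=> n; split.
    move=> [w /HK /lang_gen Hw <-].
    by case: (words_ng Hw).
  move=> [s [h /ng_goal [w [Hw Sw]]]].
  by exists w => //; apply/HK/lang_gen.
have HP : forall b j, PsiL K (b, j) <-> NG (prodG G) (inr (b, S)) j.
  move=> b j; split.
    move=> [w /HK /lang_gen Hw [i Hi [Eb ->]]].
    by case: (words_ng Hw) => _ H; apply: H => //; rewrite -Eb.
  move=> [s [h /ng_goal [w [i [Hw Hi Eb ->]]]]].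
  exists w; first by apply/HK/lang_gen.
  by exists i => //=; rewrite Eb.
apply: summ_regular.
apply: (@summ_ext _ (fun w => in_star_prod ws w /\ (NG (prodG G) (inl S) (size w) /\
         (forall x, x \in psum w -> NG (prodG G) (inr (x.1, S)) x.2)))).
  move=> w; split.
    move=> [H1 [H2 H3]]; split => //; first by apply/HL.
    move=> [b j] /Psi_psum Hx; apply/HP; exact: (H3 (b, j) Hx).
  move=> [H1 H2 H3]; split => //; split; first by apply/HL.
  move=> [b j] /Psi_psum Hx; apply/HP; exact: (H3 (b, j) Hx).
apply: summ_and (summ_in_star_prod ws) _; apply: summ_and.
  exists 'I_M.+1, (fun u => (inord (ctr T' p (size u)) : 'I_M.+1)), (fun (c : 'I_M.+1) (a : Sigma) => (inord (nxt T' p c) : 'I_M.+1)).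
  split.
    by move=> u a; rewrite size_rcons /= inordK.
  move=> u v E H.
  have E' : ctr T' p (size u) = ctr T' p (size v).
    by have := congr1 val E; rewrite /= !inordK.
  apply: (proj2 (Heq _ _)); rewrite -E'; exact: (proj1 (Heq _ _) H).
pose g (x : (Sigma * nat)%type) := (x.1, inord (ctr T' p x.2) : 'I_M.+1).
exists {set (Sigma * 'I_M.+1)%type}, (fun u => [set y | y \in map g (psum u)]),
  (fun (Z : {set (Sigma * 'I_M.+1)%type}) (a : Sigma) => [set y | (y == g (a, 1)) ||
                [exists y' in Z, y == (y'.1, inord (nxt T' p (val y'.2)))]]).
split.
  move=> u a; apply/setP => y; rewrite !inE psum_rcons map_rcons mem_rcons in_cons.
  congr orb; apply/idP/idP.
    move=> /mapP [x' /mapP [x Hx ->] ->].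
    apply/existsP; exists (g x); rewrite inE map_f //= inordK //.
  move=> /existsP [y' /andP [Hy' /eqP ->]].
  move: Hy'; rewrite inE => /mapP [x Hx ->].
  apply/mapP; exists (x.1, x.2.+1); first by apply/mapP; exists x.
  by rewrite /g /= inordK.
move=> u v E H x Hx.
have : g x \in [set y | y \in map g (psum v)] by rewrite inE map_f.
rewrite -E inE => /mapP [x' Hx' Ex].
have E1 : x.1 = x'.1 by case: Ex.
have E2 : ctr T' p x.2 = ctr T' p x'.2.
  by have := congr1 (fun y => val y.2) Ex; rewrite /= !inordK.
apply: (proj2 (Heq _ _)); rewrite E1 E2; apply: (proj1 (Heq _ _)); exact: H.
Qed.

Theorem lemma12 (Sigma : finType) (K : lang Sigma) :
  context_free K -> bounded K ->
  exists R : lang Sigma,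
    [/\ regular R, bounded R, (forall w, K w -> R w),
        (forall n, lengths K n <-> lengths R n)
      & (forall p, PsiL K p <-> PsiL R p)].
Proof.
move=> [N [G HK]] [ws Hws].
exists (fun w => [/\ in_star_prod ws w, lengths K (size w) & forall x, Psi w x -> PsiL K x]).
split.
- exact: reg_main HK.
- by exists ws => w [].
- move=> w Kw; split; first exact: Hws.
    by exists w.
  by move=> x Hx; exists w.
- move=> n; split.
    move=> [w Kw <-]; exists w => //; split; first exact: Hws.
      by exists w.
    by move=> x Hx; exists w.
  by move=> [w [_ Hl _] <-].
- move=> x; split.
    move=> [w Kw Hx]; exists w => //; split; first exact: Hws.
      by exists w.
    by move=> y Hy; exists w.
  by move=> [w [_ _ H] Hx]; exact: H.
Qed.
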